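(* Let $s\in\{1,\ldots,d\}$, $M\in\mathbb{R}^{\mathcal{I}}$, $P\subset\mathcal{I}$, $\alpha\in\mathbb{R}$. Let $G^-$ and $G$ be TT representations with the same ranks, where $G_1,\ldots,G_{s-1}$ are left orthogonal and $G_{s+1},\ldots,G_d$ are right orthogonal. Define $Z\in\mathbb{R}^{\mathcal{I}}$ by $Z_i:=M_i$ for $i\in P$ and $Z_i:=A^{G^-}_i$ for $i\in\mathcal{I}\setminus P$, and $Z^\alpha:=\alpha Z+(1-\alpha)A^{G^-}$. Then the minimizer of $\|Z^\alpha-A^{\tilde G}\|_F$ over $\tilde G_s$, where $\tilde G_\nu:=G_\nu$ for $\nu\neq s$ (the update block with overrelaxation parameter $\alpha$), is the block $G_s^{new}$ given for all $j\in\mathcal{I}_s$ by \[ G_s^{new}(j) = (G^{<s})^T (G^-)^{<s}\, G^{-}_s(j)\, (G^-)^{>s} (G^{>s})^T + \sum_{i \in P,\, i_s = j} \alpha\, (M_i - A^{G^{-}}_i)\, (G_1(i_1)\cdots G_{s-1}(i_{s-1}))^T\, (G_{s+1}(i_{s+1})\cdots G_d(i_d))^T. \]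
   Context: Let $\mathcal{I}_\mu=\{1,\ldots,n_\mu\}$, $\mathcal{I}=\mathcal{I}_1\times\cdots\times\mathcal{I}_d$. A TT representation with ranks $r_0=1,r_1,\ldots,r_{d-1},r_d=1$ consists of maps $G_\mu:\mathcal{I}_\mu\to\mathbb{R}^{r_{\mu-1}\times r_\mu}$; it represents $A^G_{i_1,\ldots,i_d}=G_1(i_1)\cdots G_d(i_d)$. $\|\cdot\|_F$ is the Euclidean norm of all entries. $G_\mu$ is left orthogonal if $\sum_{i}G_\mu(i)^TG_\mu(i)=I$, right orthogonal if $\sum_i G_\mu(i)G_\mu(i)^T=I$. For a representation $H$, $H^{<s}$ is the matrix with rows indexed by $(i_1,\ldots,i_{s-1})$, row $(i_1,\ldots,i_{s-1})$ being $H_1(i_1)\cdots H_{s-1}(i_{s-1})\in\mathbb{R}^{1\times r_{s-1}}$ (the $1\times1$ identity if $s=1$), and $H^{>s}$ is the matrix with columns indexed by $(i_{s+1},\ldots,i_d)$, column $(i_{s+1},\ldots,i_d)$ being $H_{s+1}(i_{s+1})\cdots H_d(i_d)\in\mathbb{R}^{r_s\times1}$ (the $1\times1$ identity if $s=d$). *)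

(* Defs.v *)
From HB Require Import structures.
From mathcomp Require Import all_boot all_order all_algebra.
Set Implicit Arguments. Unset Strict Implicit. Unset Printing Implicit Defensive.
Import Order.TTheory GRing.Theory Num.Theory.
Local Open Scope ring_scope.

(* Conventions (0-based): the paper's mode mu = 1..d is our position mu = 0..d-1.
   n mu = n_{mu+1};  ranks r : nat -> nat with r mu = r_{mu} of the paper, so the
   core at position mu has size r mu x r mu.+1, and r 0 = r d = 1 are hypotheses. *)

Section TT.
Variables (R : rcfType) (d : nat) (n r : nat -> nat).

(* A TT representation: one core G mu : I_mu -> R^{r mu x r (mu+1)} per position
   (only positions mu < d are ever used). *)
Definition tt_rep := forall mu : nat, 'I_(n mu) -> 'M[R]_(r mu, r mu.+1).

Local Notation midx := {dffun forall mu : 'I_d, 'I_(n mu)}.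
Local Notation pidx s := {dffun forall j : 'I_s, 'I_(n j)}.
Local Notation sidx s := {dffun forall j : 'I_(d - s.+1), 'I_(n (j + s.+1))}.

Fixpoint cprod (G : tt_rep) (a k : nat) :
    (forall j : 'I_k, 'I_(n (j + a))) -> 'M[R]_(r a, r (k + a)) :=
  match k return (forall j : 'I_k, 'I_(n (j + a))) -> 'M[R]_(r a, r (k + a)) with
  | 0 => fun _ => 1%:M
  | k'.+1 => fun f =>
      cprod G (fun j : 'I_k' => f (widen_ord (leqnSn k') j)) *m G (k' + a) (f ord_max)
  end.

Lemma n_addn0 (j : nat) : n j = n (j + 0)%N. Proof. by rewrite addn0. Qed.
Lemma r_addn0 (j : nat) : r (j + 0)%N = r j. Proof. by rewrite addn0. Qed.

Lemma suff_lt (s : nat) (j : 'I_(d - s.+1)) : (j + s.+1 < d)%N.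
Proof. have := ltn_ord j; rewrite ltn_subRL addnC; exact. Qed.

Lemma subnK' (s : 'I_d) : (d - s.+1 + s.+1 = d)%N.
Proof. by rewrite subnK // ltn_ord. Qed.

Variables (r0 : r 0 = 1%N) (rd : r d = 1%N).

(* A^G_i = G_1(i_1) ... G_d(i_d), a 1 x 1 matrix identified with a scalar *)
Definition ttval (G : tt_rep) (i : midx) : R :=
  (castmx (r0, etrans (r_addn0 d) rd)
     (cprod G (a := 0) (k := d) (fun j => cast_ord (n_addn0 j) (i j)))) ord0 ord0.

(* row (i_1..i_{s}) of H^{<s} : the 1 x r_s row  H_1(i_1) ... H_s(i_s)
   (paper: H^{<s+1}; empty product = 1 x 1 identity) *)
Definition lrow (G : tt_rep) (s : nat) (p : pidx s) : 'rV[R]_(r s) :=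
  castmx (r0, r_addn0 s)
    (cprod G (a := 0) (k := s) (fun j => cast_ord (n_addn0 j) (p j))).

Definition rcol (G : tt_rep) (s : 'I_d) (q : sidx s) : 'cV[R]_(r s.+1) :=
  castmx (erefl (r s.+1), etrans (congr1 r (subnK' s)) rd)
    (cprod G (a := s.+1) (k := d - s.+1) (fun j => q j)).

Definition pre_of (s : 'I_d) (i : midx) : pidx s :=
  [ffun j : 'I_s => i (widen_ord (ltnW (ltn_ord s)) j)].
Definition suf_of (s : 'I_d) (i : midx) : sidx s :=
  [ffun j : 'I_(d - s.+1) => i (Ordinal (suff_lt j))].

End TT.

Notation midx d n := {dffun forall mu : 'I_d, 'I_(n mu)}.
Notation pidx n s := {dffun forall j : 'I_s, 'I_(n j)}.
Notation sidx d n s := {dffun forall j : 'I_(d - s.+1), 'I_(n (j + s.+1))%N}.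

Arguments ttval {R d n r} r0 rd G i.
Arguments lrow {R n r} r0 G s p.
Arguments rcol {R d n r} rd G s q.

Definition left_orth (R : rcfType) (n r : nat -> nat) (G : tt_rep R n r) (mu : nat) :=
  \sum_(i : 'I_(n mu)) (G mu i)^T *m G mu i = 1%:M.
Definition right_orth (R : rcfType) (n r : nat -> nat) (G : tt_rep R n r) (mu : nat) :=
  \sum_(i : 'I_(n mu)) G mu i *m (G mu i)^T = 1%:M.

Definition upd (R : rcfType) (n r : nat -> nat) (G : tt_rep R n r) (s : nat)
    (H : 'I_(n s) -> 'M[R]_(r s, r s.+1)) : tt_rep R n r :=
  fun mu => match @eqP _ s mu with
            | ReflectT e => eq_rect s (fun m => 'I_(n m) -> 'M[R]_(r m, r m.+1)) H mu e
            | ReflectF _ => G mu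
            end.

Definition frob (R : rcfType) (d : nat) (n : nat -> nat) (X : midx d n -> R) : R :=
  Num.sqrt (\sum_(i : midx d n) X i ^+ 2).

(* Main.v *)
Require Import Defs.
From HB Require Import structures.
From mathcomp Require Import all_boot all_order all_algebra.
From mathcomp Require Import ring.
Set Implicit Arguments. Unset Strict Implicit. Unset Printing Implicit Defensive.
Import Order.TTheory GRing.Theory Num.Theory.
Local Open Scope ring_scope.

Section PP.
Variables (R : rcfType) (r : nat -> nat) (X : forall m, 'M[R]_(r m, r m.+1)).

Definition idm a b : 'M[R]_(r a, r b) := conform_mx 0 (1%:M : 'M[R]_(r a)).

Fixpoint pp a b : 'M[R]_(r a, r b) :=
  match b with
  | 0 => idm a 0
  | b'.+1 => if (a <= b')%N then pp a b' *m X b' else idm a b'.+1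
  end.

Lemma pp_id a : pp a a = 1%:M.
Proof.
case: a => [|a] /=; first by rewrite /idm conform_mx_id.
by rewrite ltnn /idm conform_mx_id.
Qed.

Lemma pp_split a m b : (a <= m)%N -> (m <= b)%N -> pp a b = pp a m *m pp m b.
Proof.
move=> am; elim: b => [|b IH] mb.
  have m0 : m = 0%N by apply/eqP; rewrite -leqn0.
  subst m; by rewrite pp_id mulmx1.
rewrite leq_eqVlt in mb; case/orP: mb => [/eqP <-|mb]; first by rewrite pp_id mulmx1.
have mb' : (m <= b)%N by [].
by rewrite /= (leq_trans am mb') mb' IH // mulmxA.
Qed.

Lemma pp_S a : pp a a.+1 = X a.
Proof. by rewrite /= leqnn pp_id mul1mx. Qed.

Lemma pp_cast a b b' (e : b = b') c c' (e1 : r a = c) (e2 : r b = c') (e3 : r b' = c') :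
  castmx (e1, e2) (pp a b) = castmx (e1, e3) (pp a b').
Proof. by case: b' / e e3 => e3; rewrite (eq_irrelevance e2 e3). Qed.
End PP.

Lemma castmx_mulmx (R : rcfType) m m' k p p' (e1 : m = m') (e2 : p = p')
   (A : 'M[R]_(m, k)) (B : 'M[R]_(k, p)) :
  castmx (e1, e2) (A *m B) = castmx (e1, erefl k) A *m castmx (erefl k, e2) B.
Proof. by case: m' / e1; case: p' / e2; rewrite !castmx_id. Qed.

Section Cprod.
Variables (R : rcfType) (d : nat) (n r : nat -> nat).

Lemma cprod_pp (G : tt_rep R n r) a k f (X : forall m, 'M[R]_(r m, r m.+1)) :
  (forall j : 'I_k, X (j + a)%N = G (j + a)%N (f j)) -> cprod G (a:=a) (k:=k) f = pp X a (k + a).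
Proof.
elim: k f => [|k IH] f H /=; first by rewrite pp_id.
rewrite leq_addl IH; last by move=> j; exact: (H (widen_ord (leqnSn k) j)).
by rewrite (H ord_max).
Qed.

Lemma cprod_ext (G G' : tt_rep R n r) a k f f' :
  (forall j : 'I_k, G (j + a)%N (f j) = G' (j + a)%N (f' j)) ->
  cprod G (a:=a) (k:=k) f = cprod G' (a:=a) (k:=k) f'.
Proof.
elim: k f f' => [|k IH] f f' H //=.
rewrite (IH _ (fun j => f' (widen_ord (leqnSn k) j))); last by move=> j; exact: (H (widen_ord (leqnSn k) j)).
by rewrite (H ord_max).
Qed.
End Cprod.

Lemma dffun_congr (I : finType) (F : I -> nat) (p : {dffun forall j : I, 'I_(F j)}) a b :
  a = b -> nat_of_ord (p a) = nat_of_ord (p b).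
Proof. by move->. Qed.

Definition sbool (b : bool) : {b} + {~~ b} :=
  if b as b return {b} + {~~ b} then left isT else right isT.


Section Peel.
Variables (F : nat -> nat) (k : nat).
Local Notation fam k := {dffun forall j : 'I_k, 'I_(F j)}.

Lemma lastE (j : 'I_k.+1) : ~~ (j < k)%N -> F k = F j.
Proof.
move=> h; congr F; have := ltn_ord j; rewrite ltnS => hj.
by apply/eqP; rewrite eqn_leq hj andbT leqNgt.
Qed.

Definition extL (p : fam k) (x : 'I_(F k)) : fam k.+1 :=
  [ffun j : 'I_k.+1 => match sbool (j < k)%N with
     | left h => p (Ordinal h) | right h => cast_ord (lastE h) x end].

Definition trunc (p : fam k.+1) : fam k := [ffun j : 'I_k => p (widen_ord (leqnSn k) j)].

Lemma extL_widen p x (j : 'I_k) : extL p x (widen_ord (leqnSn k) j) = p j.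
Proof.
rewrite ffunE; case: sbool => h.
  apply: val_inj; apply: (@dffun_congr _ (fun j : 'I_k => F j)); exact: val_inj.
by case/negP: h; exact: (ltn_ord j).
Qed.

Lemma extL_last p x : extL p x ord_max = x.
Proof.
rewrite ffunE; case: sbool => h; first by exfalso; move: h; rewrite /= ltnn.
exact: val_inj.
Qed.

Lemma trunc_extL p x : trunc (extL p x) = p.
Proof. by apply/ffunP => j; rewrite ffunE extL_widen. Qed.

Lemma extL_trunc p : extL (trunc p) (p ord_max) = p.
Proof.
apply/ffunP => j; rewrite ffunE; case: sbool => h.
  rewrite ffunE; apply: val_inj.
  apply: (@dffun_congr _ (fun j : 'I_k.+1 => F j)); exact: val_inj.
apply: val_inj => /=.
apply: (@dffun_congr _ (fun j : 'I_k.+1 => F j)); apply: val_inj => /=.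
have := ltn_ord j; rewrite ltnS => hj.
by apply/eqP; rewrite eqn_leq hj andbT leqNgt.
Qed.

Lemma big_peel (V : nmodType) (Phi : fam k.+1 -> V) :
  \sum_(p : fam k.+1) Phi p = \sum_(p : fam k) \sum_(x : 'I_(F k)) Phi (extL p x).
Proof.
rewrite pair_big /=.
rewrite (reindex (fun u : fam k * 'I_(F k) => extL u.1 u.2)) //=.
exists (fun p => (trunc p, p ord_max)) => [[p x] _|p _] /=.
  by rewrite trunc_extL extL_last.
exact: extL_trunc.
Qed.
End Peel.

Lemma big_cast_ord (V : nmodType) m m' (e : m = m') (f : 'I_m' -> V) :
  \sum_(x : 'I_m) f (cast_ord e x) = \sum_(y : 'I_m') f y.
Proof. by case: m' / e f => f; apply: eq_bigr => x _; rewrite cast_ord_id. Qed.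

Section Fact.
Variables (R : rcfType) (d : nat) (n r : nat -> nat) (r0 : r 0%N = 1%N) (rd : r d = 1%N).
Variable (s : 'I_d).

Definition Xi (G : tt_rep R n r) (i : midx d n) m : 'M[R]_(r m, r m.+1) :=
  match sbool (m < d)%N with left h => G m (i (Ordinal h)) | right _ => 0 end.

Lemma Xi_eq G i m (h : (m < d)%N) : Xi G i m = G m (i (Ordinal h)).
Proof.
rewrite /Xi; destruct (sbool (m < d)%N) as [h'|h'].
  by rewrite (bool_irrelevance h' h).
by rewrite h in h'.
Qed.

Lemma ttval_pp G i : ttval r0 rd G i = (castmx (r0, rd) (pp (Xi G i) 0 d)) ord0 ord0.
Proof.
rewrite /ttval (cprod_pp (X := Xi G i)); last first.
  move=> j; have h : (j + 0 < d)%N by rewrite addn0.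
  rewrite (Xi_eq _ _ h); congr (G _ _); apply: val_inj => /=.
  by apply: (@dffun_congr _ (fun mu : 'I_d => n mu)); apply: val_inj; rewrite /= addn0.
by rewrite (pp_cast _ (addn0 d) _ _ rd).
Qed.

Lemma lrow_pp (G : tt_rep R n r) i : lrow r0 G s (pre_of s i) = castmx (r0, erefl) (pp (Xi G i) 0 s).
Proof.
rewrite /lrow (cprod_pp (X := Xi G i)); last first.
  move=> j; have h : (j + 0 < d)%N by rewrite addn0 (ltn_trans (ltn_ord j)).
  rewrite (Xi_eq _ _ h) ffunE; congr (G _ _); apply: val_inj => /=.
  by apply: (@dffun_congr _ (fun mu : 'I_d => n mu)); apply: val_inj; rewrite /= addn0.
by rewrite (pp_cast _ (addn0 s) _ _ (erefl (r s))).
Qed.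

Lemma rcol_pp (G : tt_rep R n r) i : rcol rd G s (suf_of s i) = castmx (erefl, rd) (pp (Xi G i) s.+1 d).
Proof.
rewrite /rcol (cprod_pp (X := Xi G i)); last first.
  move=> j; rewrite (Xi_eq _ _ (suff_lt j)) ffunE //.
by rewrite (pp_cast _ (subnK' s) _ _ rd).
Qed.

Lemma ttval_fact (G : tt_rep R n r) i :
  ttval r0 rd G i = (lrow r0 G s (pre_of s i) *m G s (i s) *m rcol rd G s (suf_of s i)) 0 0.
Proof.
rewrite ttval_pp lrow_pp rcol_pp (pp_split _ (m := s)) // 1?ltnW //.
rewrite (pp_split _ (a := s) (m := s.+1)) // pp_S mulmxA castmx_mulmx castmx_mulmx.
rewrite (Xi_eq _ _ (ltn_ord s)); congr ((_ *m G s _ *m _) _ _).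
by apply: val_inj; apply: (@dffun_congr _ (fun mu : 'I_d => n mu)); apply: val_inj.
Qed.

Lemma upd_neq (G : tt_rep R n r) (H : 'I_(n s) -> 'M[R]_(r s, r s.+1)) (m : nat) (x : 'I_(n m)) :
  m <> s -> upd G H (mu:=m) x = G m x.
Proof. by move=> ms; rewrite /upd; case: eqP => // e; case: ms. Qed.

Lemma upd_eq (G : tt_rep R n r) (H : 'I_(n s) -> 'M[R]_(r s, r s.+1)) (x : 'I_(n s)) :
  upd G H (mu:=s) x = H x.
Proof. by rewrite /upd; case: eqP => // e; rewrite (eq_irrelevance e (erefl _)). Qed.

Lemma lrow_upd (G : tt_rep R n r) (H : 'I_(n s) -> 'M[R]_(r s, r s.+1)) p : lrow r0 (upd G H) s p = lrow r0 G s p.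
Proof.
rewrite /lrow; congr castmx; apply: cprod_ext.
move=> j; rewrite upd_neq // addn0 => e; move: (ltn_ord j); by rewrite e ltnn.
Qed.

Lemma rcol_upd (G : tt_rep R n r) (H : 'I_(n s) -> 'M[R]_(r s, r s.+1)) q : rcol rd (upd G H) s q = rcol rd G s q.
Proof.
rewrite /rcol; congr castmx; apply: cprod_ext.
move=> j; rewrite upd_neq // => e; move: (leq_addl j s.+1); by rewrite e ltnn.
Qed.

Lemma sum_castT (m m' c c' : nat) (e1 : m = m') (e2 : c = c') (I : finType) (A B : I -> 'M[R]_(m, c)) :
  \sum_(p : I) (castmx (e1, e2) (A p))^T *m castmx (e1, e2) (B p)
  = castmx (e2, e2) (\sum_(p : I) (A p)^T *m B p).
Proof. case: m' / e1; case: c' / e2; rewrite castmx_id; by under eq_bigr do rewrite castmx_id. Qed.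

Lemma castmx1 (c c' : nat) (e : c = c') : castmx (e, e) (1%:M : 'M[R]_c) = 1%:M.
Proof. by case: c' / e; rewrite castmx_id. Qed.

Lemma left_orth_sum (G : tt_rep R n r) (HL : forall mu, (mu < s)%N -> left_orth G mu) :
  \sum_(p : pidx n s) (lrow r0 G s p)^T *m lrow r0 G s p = 1%:M.
Proof.
have key : forall k, (k <= s)%N ->
  \sum_(p : pidx n k) (cprod G (a:=0) (k:=k) (fun j => cast_ord (n_addn0 n j) (p j)))^T
     *m cprod G (a:=0) (k:=k) (fun j => cast_ord (n_addn0 n j) (p j)) = 1%:M.
  elim => [_|k IH ks].
    rewrite /= sumr_const card_dep_ffun /=.
    have -> : [seq #|'I_(n x)| | x : 'I_0] = [::].
      by apply: size0nil; rewrite size_map size_enum_ord.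
    by rewrite /= trmx1 mulmx1.
  have E : forall p x, cprod G (a:=0) (k:=k.+1) (fun j => cast_ord (n_addn0 n j) (extL p x j))
     = cprod G (a:=0) (k:=k) (fun j => cast_ord (n_addn0 n j) (p j)) *m G (k+0)%N (cast_ord (n_addn0 n k) x).
    move=> p x /=; rewrite extL_last; congr (_ *m _); apply: cprod_ext => j.
    by rewrite extL_widen.
  rewrite (big_peel (F:=n)).
  under eq_bigr do under eq_bigr do rewrite E trmx_mul mulmxA -[_ *m _ *m cprod _ _]mulmxA.
  rewrite exchange_big /=.
  under eq_bigr do rewrite -mulmx_suml -mulmx_sumr IH 1?ltnW // mulmx1.
  rewrite (big_cast_ord _ (fun y => (G (k+0)%N y)^T *m G (k+0)%N y)).
  by apply: HL; change (k + 0 < s)%N; rewrite addn0.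
pose C := fun p : pidx n s => cprod G (a:=0) (k:=s) (fun j => cast_ord (n_addn0 n j) (p j)).
transitivity (castmx (r_addn0 r s, r_addn0 r s) (\sum_(p : pidx n s) (C p)^T *m C p)).
  exact: (sum_castT r0 (r_addn0 r s) C C).
by rewrite key // castmx1.
Qed.

Lemma sum_castT' (m c c' : nat) (e2 : c = c') (I : finType) (A B : I -> 'M[R]_(m, c)) :
  \sum_(p : I) castmx (erefl m, e2) (A p) *m (castmx (erefl m, e2) (B p))^T
  = \sum_(p : I) A p *m (B p)^T.
Proof. case: c' / e2; by under eq_bigr do rewrite castmx_id. Qed.

Lemma right_orth_sum (G : tt_rep R n r) (HR : forall mu, (s < mu < d)%N -> right_orth G mu) :
  \sum_(q : sidx d n s) rcol rd G s q *m (rcol rd G s q)^T = 1%:M.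
Proof.
have key : forall k, (k + s.+1 <= d)%N ->
  \sum_(q : {dffun forall j : 'I_k, 'I_(n (j + s.+1)%N)})
     cprod G (a:=s.+1) (k:=k) q *m (cprod G (a:=s.+1) (k:=k) q)^T = 1%:M.
  elim => [_|k IH ks].
    rewrite /= sumr_const card_dep_ffun /=.
    have -> : [seq #|'I_(n (x + s.+1)%N)| | x : 'I_0] = [::].
      by apply: size0nil; rewrite size_map size_enum_ord.
    by rewrite /= trmx1 mulmx1.
  have E : forall q x, cprod G (a:=s.+1) (k:=k.+1) (extL (F := fun j => n (j + s.+1)%N) q x)
     = cprod G (a:=s.+1) (k:=k) q *m G (k + s.+1)%N x.
    move=> q x /=; rewrite extL_last; congr (_ *m _); apply: cprod_ext => j.
    by rewrite extL_widen.
  rewrite (big_peel (F := fun j => n (j + s.+1)%N)).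
  under eq_bigr do under eq_bigr do rewrite E trmx_mul mulmxA -[_ *m _ *m (G _ _)^T]mulmxA.
  under eq_bigr do rewrite -mulmx_suml -mulmx_sumr.
  rewrite (_ : \sum_(x : 'I_(n (k + s.+1)%N)) G (k + s.+1)%N x *m (G (k + s.+1)%N x)^T = 1%:M).
    under eq_bigr do rewrite mulmx1.
    by apply: IH; apply: ltnW.
  apply: HR; rewrite ks andbT.
  by rewrite addnS ltnS leq_addl.
pose C := fun q : sidx d n s => cprod G (a:=s.+1) (k:=d - s.+1) q.
transitivity (\sum_(q : sidx d n s) C q *m (C q)^T).
  exact: (sum_castT' _ C C).
by rewrite key // subnK.
Qed.

Lemma sufb (mu : 'I_d) : (s < mu)%N -> (mu - s.+1 < d - s.+1)%N.
Proof. by move=> h; apply: ltn_sub2r => //; apply: leq_ltn_trans h _. Qed.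

Lemma eS (mu : 'I_d) (h : (s < mu)%N) : n (mu - s.+1 + s.+1)%N = n mu.
Proof. by rewrite subnK. Qed.

Lemma eqM (mu : 'I_d) : ~~ (mu < s)%N -> ~~ (s < mu)%N -> (s : nat) = mu.
Proof. by rewrite -!leqNgt => h1 h2; apply/eqP; rewrite eqn_leq h1 h2. Qed.

Lemma eM (mu : 'I_d) (h1 : ~~ (mu < s)%N) (h2 : ~~ (s < mu)%N) : n s = n mu.
Proof. by rewrite (eqM h1 h2). Qed.

Definition glue (p : pidx n s) (x : 'I_(n s)) (q : sidx d n s) : midx d n :=
  [ffun mu : 'I_d => match sbool (mu < s)%N with
   | left h => p (Ordinal h)
   | right h1 => match sbool (s < mu)%N with
      | left h2 => cast_ord (eS h2) (q (Ordinal (sufb h2)))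
      | right h2 => cast_ord (eM h1 h2) x end end].

Lemma glue_pre p x q : pre_of s (glue p x q) = p.
Proof.
apply/ffunP => j; rewrite !ffunE; case: sbool => h.
  apply: val_inj; apply: (@dffun_congr _ (fun j : 'I_s => n j)); exact: val_inj.
by case/negP: h; exact: (ltn_ord j).
Qed.

Lemma glue_suf p x q : suf_of s (glue p x q) = q.
Proof.
apply/ffunP => j; rewrite !ffunE; case: sbool => h.
  exfalso; move: h; rewrite /= ltnNge; apply/negP/negPn.
  by rewrite (leq_trans (leqnSn s)) // leq_addl.
case: sbool => h2.
  apply: val_inj; apply: (@dffun_congr _ (fun j : 'I_(d - s.+1) => n (j + s.+1)%N)).
  by apply: val_inj; rewrite /= addnK.
by case/negP: h2; rewrite /= addnS ltnS leq_addl.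
Qed.

Lemma glue_s p x q : glue p x q s = x.
Proof.
rewrite ffunE; case: sbool => h; first by exfalso; move: h; rewrite ltnn.
destruct (sbool (s < s)%N) as [h2|h2]; first by exfalso; move: h2; rewrite ltnn.
exact: val_inj.
Qed.

Lemma glue_eta i : glue (pre_of s i) (i s) (suf_of s i) = i.
Proof.
apply/ffunP => mu; rewrite ffunE; case: sbool => h.
  rewrite ffunE; apply: val_inj.
  apply: (@dffun_congr _ (fun mu : 'I_d => n mu)); exact: val_inj.
case: sbool => h2.
  rewrite ffunE; apply: val_inj => /=.
  apply: (@dffun_congr _ (fun mu : 'I_d => n mu)); apply: val_inj => /=.
  by rewrite subnK.
apply: val_inj => /=.
apply: (@dffun_congr _ (fun mu : 'I_d => n mu)); apply: val_inj => /=.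
exact: eqM.
Qed.

Lemma big_glue (V : nmodType) (j : 'I_(n s)) (Phi : pidx n s -> sidx d n s -> V) :
  \sum_(i : midx d n | i s == j) Phi (pre_of s i) (suf_of s i) = \sum_p \sum_q Phi p q.
Proof.
rewrite pair_big (reindex_onto (fun u : pidx n s * sidx d n s => glue u.1 j u.2)
   (fun i => (pre_of s i, suf_of s i))) /=; last first.
  by move=> i /eqP <-; exact: glue_eta.
apply: eq_big => [[p q]|[p q] _] /=; rewrite ?glue_pre ?glue_suf ?glue_s //.
by rewrite !eqxx.
Qed.

Definition ip a b (A B : 'M[R]_(a, b)) : R := \sum_(x < a) \sum_(y < b) A x y * B x y.

Lemma ip_suml a b (I : finType) (P : pred I) (A : I -> 'M[R]_(a, b)) B :
  \sum_(i | P i) ip (A i) B = ip (\sum_(i | P i) A i) B.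
Proof.
rewrite /ip exchange_big /=; apply: eq_bigr => x _.
rewrite exchange_big /=; apply: eq_bigr => y _.
by rewrite summxE mulr_suml.
Qed.

Lemma ipZ a b c (A B : 'M[R]_(a, b)) : c * ip A B = ip (c *: A) B.
Proof.
rewrite /ip mulr_sumr; apply: eq_bigr => x _; rewrite mulr_sumr; apply: eq_bigr => y _.
by rewrite mxE mulrA.
Qed.

Lemma ip0 a b (B : 'M[R]_(a, b)) : ip 0 B = 0.
Proof. by rewrite /ip big1 // => x _; rewrite big1 // => y _; rewrite mxE mul0r. Qed.

Lemma ip_ge0 a b (A : 'M[R]_(a, b)) : 0 <= ip A A.
Proof. by apply: sumr_ge0 => x _; apply: sumr_ge0 => y _; rewrite -expr2 sqr_ge0. Qed.

Lemma ip_eq0 a b (A : 'M[R]_(a, b)) : ip A A = 0 -> A = 0.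
Proof.
move=> h; apply/matrixP => x y; rewrite mxE.
have hy : forall x y, 0 <= A x y * A x y by move=> ? ?; rewrite -expr2 sqr_ge0.
have hx : forall x, 0 <= \sum_(y < b) A x y * A x y by move=> ?; apply: sumr_ge0 => ? _.
have := @psumr_eq0P _ _ _ _ (fun x _ => hx x) h x isT.
move=> h2; have := @psumr_eq0P _ _ _ _ (fun y _ => hy x y) h2 y isT; move/eqP.
by rewrite mulf_eq0 orbb => /eqP.
Qed.

Lemma scal_lemma a a' b b' (L : 'rV[R]_a) (L' : 'rV[R]_a') (A : 'M[R]_(a, b))
   (Rc : 'cV[R]_b) (Rc' : 'cV[R]_b') :
  (L *m A *m Rc) 0 0 *: (L'^T *m Rc'^T) = L'^T *m L *m A *m Rc *m Rc'^T.
Proof.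
have -> : L'^T *m L *m A *m Rc *m Rc'^T = L'^T *m (L *m A *m Rc) *m Rc'^T by rewrite !mulmxA.
set c := (L *m A *m Rc) 0 0.
have -> : L *m A *m Rc = c%:M by apply: mx11_scalar.
by rewrite mul_mx_scalar scalemxAl.
Qed.

Definition Tm (G : tt_rep R n r) (D : 'I_(n s) -> 'M[R]_(r s, r s.+1)) (i : midx d n) : R :=
  (lrow r0 G s (pre_of s i) *m D (i s) *m rcol rd G s (suf_of s i)) 0 0.
Definition W (G : tt_rep R n r) (i : midx d n) :=
  (lrow r0 G s (pre_of s i))^T *m (rcol rd G s (suf_of s i))^T.
Definition Adj (G : tt_rep R n r) (X : midx d n -> R) (j : 'I_(n s)) :=
  \sum_(i : midx d n | i s == j) X i *: W G i.

Lemma scal_ip a b (L : 'rV[R]_a) (A : 'M[R]_(a, b)) (Rc : 'cV[R]_b) :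
  (L *m A *m Rc) 0 0 = ip (L^T *m Rc^T) A.
Proof.
rewrite /ip !mxE; under eq_bigr do rewrite mxE mulr_suml.
rewrite exchange_big /=; apply: eq_bigr => x _; apply: eq_bigr => y _.
by rewrite mxE big_ord1 !mxE mulrAC.
Qed.

Lemma sum_T G X D : \sum_(i : midx d n) X i * Tm G D i = \sum_j ip (Adj G X j) (D j).
Proof.
rewrite (partition_big (fun i : midx d n => i s) xpredT) //=.
apply: eq_bigr => j _; rewrite /Adj -ip_suml; apply: eq_bigr => i /eqP e.
by rewrite /Tm scal_ip e ipZ.
Qed.

Lemma AdjF (G G' : tt_rep R n r) (A : 'I_(n s) -> 'M[R]_(r s, r s.+1)) j :
  Adj G (fun i => (lrow r0 G' s (pre_of s i) *m A (i s) *m rcol rd G' s (suf_of s i)) 0 0) j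
  = (\sum_p (lrow r0 G s p)^T *m lrow r0 G' s p) *m A j
      *m (\sum_q rcol rd G' s q *m (rcol rd G s q)^T).
Proof.
rewrite /Adj /W.
pose Phi := fun p q => (lrow r0 G s p)^T *m lrow r0 G' s p *m A j
    *m rcol rd G' s q *m (rcol rd G s q)^T.
transitivity (\sum_(i : midx d n | i s == j) Phi (pre_of s i) (suf_of s i)).
  by apply: eq_bigr => i /eqP e; rewrite /Phi -e scal_lemma.
rewrite big_glue /Phi exchange_big mulmx_sumr; apply: eq_bigr => q _.
rewrite -mulmxA mulmx_suml; apply: eq_bigr => p _.
by rewrite !mulmxA.
Qed.

Lemma Adj_ext G X Y j : (forall i, X i = Y i) -> Adj G X j = Adj G Y j.
Proof. by move=> h; apply: eq_bigr => i _; rewrite h. Qed.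

Lemma Adj_sub G X Y j : Adj G (fun i => X i - Y i) j = Adj G X j - Adj G Y j.
Proof. by rewrite /Adj -sumrB; apply: eq_bigr => i _; rewrite scalerBl. Qed.

Lemma Adj_add G X Y j : Adj G (fun i => X i + Y i) j = Adj G X j + Adj G Y j.
Proof. by rewrite /Adj -big_split; apply: eq_bigr => i _; rewrite scalerDl. Qed.

Lemma mxBE a b (A B : 'M[R]_(a, b)) x y : (A - B) x y = A x y - B x y.
Proof. by rewrite !mxE. Qed.

Lemma main (M : midx d n -> R) (P : {set midx d n}) (alpha : R)
    (Gm G : tt_rep R n r)
    (Hleft : forall mu : nat, (mu < s)%N -> left_orth G mu)
    (Hright : forall mu : nat, (s < mu < d)%N -> right_orth G mu) :
  let Z : midx d n -> R := fun i => if i \in P then M i else ttval r0 rd Gm i in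
  let Za : midx d n -> R := fun i => alpha * Z i + (1 - alpha) * ttval r0 rd Gm i in
  let Gnew : 'I_(n s) -> 'M[R]_(r s, r s.+1) := fun j =>
    (\sum_(p : pidx n s) (lrow r0 G s p)^T *m lrow r0 Gm s p) *m Gm s j
      *m (\sum_(q : sidx d n s) rcol rd Gm s q *m (rcol rd G s q)^T)
    + \sum_(i in P | i s == j)
        (alpha * (M i - ttval r0 rd Gm i))
          *: ((lrow r0 G s (pre_of s i))^T *m (rcol rd G s (suf_of s i))^T) in
  let err (H : 'I_(n s) -> 'M[R]_(r s, r s.+1)) :=
    frob (fun i => Za i - ttval r0 rd (upd G H) i) in
  (forall H, err Gnew <= err H) /\
  (forall H, err H <= err Gnew -> forall j, H j = Gnew j).
Proof.
move=> Z Za Gnew err.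
have Tupd : forall H i, ttval r0 rd (upd G H) i = Tm G H i.
  by move=> H i; rewrite ttval_fact /Tm lrow_upd rcol_upd upd_eq.
pose E := fun H => \sum_(i : midx d n) (Za i - Tm G H i) ^+ 2.
have errE : forall H, err H = Num.sqrt (E H).
  by move=> H; rewrite /err /frob; congr Num.sqrt; apply: eq_bigr => i _; rewrite Tupd.
have E_ge0 : forall H, 0 <= E H by move=> H; apply: sumr_ge0 => i _; rewrite sqr_ge0.
have AdjT : forall D j, Adj G (Tm G D) j = D j.
  move=> D j; have := AdjF G G D j.
  by rewrite left_orth_sum // right_orth_sum // mul1mx mulmx1.
have AdjZa : forall j, Adj G Za j = Gnew j.
  move=> j.
  rewrite (_ : Adj G Za j = Adj G (fun i => ttval r0 rd Gm i + alpha * (Z i - ttval r0 rd Gm i)) j); last first.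
    by apply: Adj_ext => i; rewrite /Za; ring.
  rewrite Adj_add /Gnew; congr (_ + _).
    rewrite (_ : Adj G _ j = Adj G (fun i => (lrow r0 Gm s (pre_of s i) *m Gm s (i s)
                 *m rcol rd Gm s (suf_of s i)) 0 0) j); last by apply: Adj_ext => i; rewrite ttval_fact.
    exact: AdjF.
  rewrite /Adj big_mkcondl /=; apply: eq_bigr => i _; rewrite /Z /W.
  by case: (i \in P); rewrite ?subrr ?mulr0 ?scale0r.
have key : forall H, E H = E Gnew + \sum_j ip (H j - Gnew j) (H j - Gnew j).
  move=> H; pose D := fun j => H j - Gnew j.
  have TH : forall i, Tm G H i = Tm G Gnew i + Tm G D i.
    by move=> i; rewrite /Tm /D mulmxBr mulmxBl mxBE addrC subrK.
  rewrite /E.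
  transitivity (\sum_(i : midx d n) ((Za i - Tm G Gnew i)^+2 + Tm G D i * Tm G D i
                  - ((Za i - Tm G Gnew i) * Tm G D i) *+ 2)).
    by apply: eq_bigr => i _; rewrite TH; ring.
  rewrite sumrB big_split /= sumrMnl sum_T sum_T.
  have -> : \sum_j ip (Adj G (fun i => Za i - Tm G Gnew i) j) (D j) = 0.
    by apply: big1 => j _; rewrite Adj_sub AdjZa AdjT subrr ip0.
  rewrite mul0rn subr0; congr (_ + _); apply: eq_bigr => j _.
  by rewrite AdjT.
split.
  move=> H; rewrite !errE ler_sqrt // (key H) lerDl.
  by apply: sumr_ge0 => j _; exact: ip_ge0.
move=> H; rewrite !errE ler_sqrt // (key H) gerDl => hS j.
have S0 : \sum_j ip (H j - Gnew j) (H j - Gnew j) = 0.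
  by apply/eqP; rewrite eq_le hS; apply: sumr_ge0 => ? _; exact: ip_ge0.
have := @psumr_eq0P _ _ _ _ (fun j _ => ip_ge0 (H j - Gnew j)) S0 j isT.
by move/ip_eq0/eqP; rewrite subr_eq0 => /eqP.
Qed.
End Fact.

(* 0-based positions: s : 'I_d is the paper's s-1+1, i.e. paper's mode s = our s + 1. *)
Theorem theorem3p7 (R : rcfType) (d : nat) (n r : nat -> nat)
    (r0 : r 0%N = 1%N) (rd : r d = 1%N)
    (s : 'I_d) (M : midx d n -> R) (P : {set midx d n}) (alpha : R)
    (Gm G : tt_rep R n r)
    (Hleft : forall mu : nat, (mu < s)%N -> left_orth G mu)
    (Hright : forall mu : nat, (s < mu < d)%N -> right_orth G mu) :
  let Z : midx d n -> R := fun i => if i \in P then M i else ttval r0 rd Gm i in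
  let Za : midx d n -> R := fun i => alpha * Z i + (1 - alpha) * ttval r0 rd Gm i in
  let Gnew : 'I_(n s) -> 'M[R]_(r s, r s.+1) := fun j =>
    (\sum_(p : pidx n s) (lrow r0 G s p)^T *m lrow r0 Gm s p) *m Gm s j
      *m (\sum_(q : sidx d n s) rcol rd Gm s q *m (rcol rd G s q)^T)
    + \sum_(i in P | i s == j)
        (alpha * (M i - ttval r0 rd Gm i))
          *: ((lrow r0 G s (pre_of s i))^T *m (rcol rd G s (suf_of s i))^T) in
  let err (H : 'I_(n s) -> 'M[R]_(r s, r s.+1)) :=
    frob (fun i => Za i - ttval r0 rd (upd G H) i) in
  (forall H, err Gnew <= err H) /\
  (forall H, err H <= err Gnew -> forall j, H j = Gnew j).
Proof. exact: (main r0 rd M P alpha Gm Hleft Hright). Qed.
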